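(* Consider the protocol $P_{RL}$ with parameter $N$ on a directed ring of size $n$ with $2\le n\le N$. The set $\mathcal{C}_{PB}$ of configurations (defined in the context) is closed: no configuration outside $\mathcal{C}_{PB}$ is reachable from a configuration in $\mathcal{C}_{PB}$.
   Context: Model. A population is a directed ring of $n\ge 2$ anonymous agents $u_0,\dots,u_{n-1}$ (indices modulo $n$) with arcs $e_i=(u_i,u_{i+1})$. A configuration $C$ assigns a state to each agent; $C\to C'$ means that $C'$ is obtained from $C$ by one interaction on some arc $e_i$, in which initiator $u_i$ and responder $u_{i+1}$ update their states by the transition function and all other agents keep their states. A configuration is reachable from $C$ if it is obtained from $C$ by finitely many such steps. Protocol $P_{RL}$ (parameter $N$). Each agent has variables $\mathit{leader}\in\{0,1\}$, $\mathit{bullet}\in\{0,1,2\}$, $\mathit{shield}\in\{0,1\}$, $\mathit{signal}\in\{0,1\}$, $\mathit{dist}\in\{0,\dots,N\}$. In an interaction with initiator $l$ and responder $r$ the following are executed in order: 1. If $l.\mathit{leader}=1$ then $l.\mathit{dist}\gets 0$. 2. If $r.\mathit{leader}=1$ then $r.\mathit{dist}\gets 0$; else if $r.\mathit{bullet}=0$ then $r.\mathit{dist}\gets\min(l.\mathit{dist}+1,N)$. 3. If $r.\mathit{dist}=N$ then $r.\mathit{leader}\gets1$, $r.\mathit{bullet}\gets2$, $r.\mathit{shield}\gets1$, $r.\mathit{signal}\gets0$, $r.\mathit{dist}\gets0$. 4. If $l.\mathit{leader}=1$ and $l.\mathit{signal}=1$ then $l.\mathit{bullet}\gets2$, $l.\mathit{shield}\gets1$,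 $l.\mathit{signal}\gets0$. 5. If $r.\mathit{leader}=1$ and $r.\mathit{signal}=1$ then $r.\mathit{bullet}\gets1$, $r.\mathit{shield}\gets0$, $r.\mathit{signal}\gets0$. 6. If $l.\mathit{bullet}>0$ and $r.\mathit{leader}=1$: set $r.\mathit{leader}\gets0$ if ($l.\mathit{bullet}=2$ and $r.\mathit{shield}=0$); then $l.\mathit{bullet}\gets0$. Else, if $l.\mathit{bullet}>0$ and $r.\mathit{leader}=0$: if $r.\mathit{bullet}=0$ then $r.\mathit{bullet}\gets l.\mathit{bullet}$; then $l.\mathit{bullet}\gets0$ and $r.\mathit{signal}\gets0$. 7. $l.\mathit{signal}\gets\max(l.\mathit{signal},r.\mathit{signal},r.\mathit{leader})$. An agent is a leader if $\mathit{leader}=1$ and a follower otherwise. Definitions. In a configuration with at least one leader, $\mathrm{dist}_L(i)=\min\{j\ge0: u_{i-j}.\mathit{leader}=1\}$. The predicate $\mathrm{peaceful}(i)$ holds iff $u_{i-\mathrm{dist}_L(i)}.\mathit{shield}=1$ and $u_{i-j}.\mathit{signal}=0$ for all $j=0,1,\dots,\mathrm{dist}_L(i)$. $\mathcal{C}_{PB}$ is the set of configurations in which at least one agent is a leader and every agent $u_j$ with $u_j.\mathit{bullet}=2$ satisfies $\mathrm{peaceful}(j)$. *)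

(* Defs.v *)
From mathcomp Require Import all_boot.
Set Implicit Arguments. Unset Strict Implicit. Unset Printing Implicit Defensive.

Record state (N : nat) := St {
  leader : bool; bullet : 'I_3; shield : bool; signal : bool; dist : 'I_N.+1 }.

Arguments St {N}.

Definition b0 : 'I_3 := @Ordinal 3 0 isT.
Definition b1 : 'I_3 := @Ordinal 3 1 isT.
Definition b2 : 'I_3 := @Ordinal 3 2 isT.

Section Setters.
Variable N : nat.
Implicit Type s : state N.
Definition set_leader s (v : bool) : state N := St v (bullet s) (shield s) (signal s) (dist s).
Definition set_bullet s (v : 'I_3) : state N := St (leader s) v (shield s) (signal s) (dist s).
Definition set_shield s (v : bool) : state N := St (leader s) (bullet s) v (signal s) (dist s).
Definition set_signal s (v : bool) : state N := St (leader s) (bullet s) (shield s) v (dist s).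
Definition set_dist s (v : 'I_N.+1) : state N := St (leader s) (bullet s) (shield s) (signal s) v.
End Setters.

(* The transition function of P_RL: initiator l, responder r; steps 1-7
   executed in order. *)
Definition transition (N : nat) (l r : state N) : state N * state N :=
  let l := if leader l then set_dist l ord0 else l in
  let r := if leader r then set_dist r ord0
           else if (bullet r : nat) == 0 then set_dist r (inord (minn (dist l).+1 N))
           else r in
  let r := if (dist r : nat) == N then St true b2 true false ord0 else r in
  let l := if leader l && signal l
           then St (leader l) b2 true false (dist l) else l in
  let r := if leader r && signal r
           then St (leader r) b1 false false (dist r) else r in
  let '(l, r) :=
    if (0 < bullet l) && leader r then
      let r := if ((bullet l : nat) == 2) && ~~ shield r then set_leader r false else r in
      (set_bullet l b0, r)
    else if (0 < bullet l) && ~~ leader r then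
      let r := if (bullet r : nat) == 0 then set_bullet r (bullet l) else r in
      (set_bullet l b0, set_signal r false)
    else (l, r) in
  let l := set_signal l [|| signal l, signal r | leader r] in
  (l, r).

(* Configurations of the directed ring u_0,...,u_{n-1}; arc e_i = (u_i, u_{i+1}). *)
Definition config (n N : nat) := 'I_n -> state N.

Definition interact (n N : nat) (C : config n N) (i : 'I_n) : config n N :=
  let p := transition (C i) (C (ordS i)) in
  fun j => if j == i then p.1 else if j == ordS i then p.2 else C j.

Inductive reachable (n N : nat) (C : config n N) : config n N -> Prop :=
| reach_refl : reachable C C
| reach_step (C' : config n N) (i : 'I_n) :
    reachable C C' -> reachable C (interact C' i).

Definition back (n : nat) (i : 'I_n) (j : nat) : 'I_n := iter j (@ord_pred n) i.

Definition has_leader (n N : nat) (C : config n N) : Prop :=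
  exists i : 'I_n, leader (C i).

(* d = dist_L(i) = min { j >= 0 : u_{i-j}.leader = 1 } *)
Definition is_distL (n N : nat) (C : config n N) (i : 'I_n) (d : nat) : Prop :=
  leader (C (back i d)) /\ (forall j, j < d -> ~~ leader (C (back i j))).

Definition peaceful (n N : nat) (C : config n N) (i : 'I_n) : Prop :=
  exists d, is_distL C i d /\
    shield (C (back i d)) /\ (forall j, j <= d -> signal (C (back i j)) = false).

Definition C_PB (n N : nat) (C : config n N) : Prop :=
  has_leader C /\
  (forall j : 'I_n, (bullet (C j) : nat) = 2 -> peaceful C j).

(* Main.v *)
Require Import Defs.
From mathcomp Require Import all_boot.
From mathcomp Require Import zify.
Set Implicit Arguments. Unset Strict Implicit. Unset Printing Implicit Defensive.

Definition trc (N : nat) (l r : state N) (c : bool) : state N * state N :=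
  let l := if leader l then set_dist l ord0 else l in
  let r := if leader r then set_dist r ord0
           else if (bullet r : nat) == 0 then set_dist r (inord (minn (dist l).+1 N))
           else r in
  let r := if c then St true b2 true false ord0 else r in
  let l := if leader l && signal l
           then St (leader l) b2 true false (dist l) else l in
  let r := if leader r && signal r
           then St (leader r) b1 false false (dist r) else r in
  let '(l, r) :=
    if (0 < bullet l) && leader r then
      let r := if ((bullet l : nat) == 2) && ~~ shield r then set_leader r false else r in
      (set_bullet l b0, r)
    else if (0 < bullet l) && ~~ leader r then
      let r := if (bullet r : nat) == 0 then set_bullet r (bullet l) else r in
      (set_bullet l b0, set_signal r false)
    else (l, r) in
  let l := set_signal l [|| signal l, signal r | leader r] in
  (l, r).

Lemma trE N (l r : state N) : exists c, transition l r = trc l r c.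
Proof.
  exists ((dist (if leader r then set_dist r ord0
           else if (bullet r : nat) == 0 then set_dist r (inord (minn (dist (if leader l then set_dist l ord0 else l)).+1 N))
           else r) : nat) == N).
  reflexivity.
Qed.

Ltac brute l r :=
  case: (trE l r) => [+ ->]; move=> + ;
  case: l => [[] [[|[|[|?]]] ?] [] [] ?]; last (by []);
  case: r => [[] [[|[|[|?]]] ?] [] [] ?]; last (by []);
  case; by [].


Section T.
Variables (N : nat) (l r : state N).
Let p := transition l r.
Lemma T1 : leader p.1 = leader l.
Proof. rewrite /p; brute l r. Qed.
Lemma T2 : (bullet p.1 : nat) != 2.
Proof. rewrite /p; brute l r. Qed.
Lemma T3 : leader r -> signal r = false -> shield r -> leader p.2 && shield p.2 && ~~ signal p.2.
Proof. rewrite /p; brute l r. Qed.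
Lemma T4 : ~~ leader r -> leader p.2 -> shield p.2 && ~~ signal p.2.
Proof. rewrite /p; brute l r. Qed.
Lemma T5 : signal r = false -> signal p.2 = false.
Proof. rewrite /p; brute l r. Qed.
Lemma T6 : signal l = false -> ~~ leader p.2 -> signal p.2 = false -> (signal p.1 == false) && (shield p.1 == shield l).
Proof. rewrite /p; brute l r. Qed.
Lemma T7 : (bullet p.2 : nat) == 2 -> (bullet r : nat) != 2 ->
  (leader p.2 && shield p.2 && ~~ signal p.2) || [&& ~~ leader r, ~~ leader p.2, ~~ signal p.2 & ((leader p.1 && shield p.1 && ~~ signal p.1) || ((bullet l : nat) == 2))].
Proof. rewrite /p; brute l r. Qed.
Lemma T8 : leader r -> ~~ leader p.2 -> leader p.1 || ((bullet l : nat) == 2) && (~~ shield r || signal r).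
Proof. rewrite /p; brute l r. Qed.
End T.

Section Ring.
Variables (n N : nat).
Implicit Types (C : config n N) (x j : 'I_n).

Definition pw C j d := is_distL C j d /\ shield (C (back j d)) /\
  (forall t, t <= d -> signal (C (back j t)) = false).

Lemma backS x m : back x m.+1 = ord_pred (back x m). Proof. by []. Qed.
Lemma backD x a b : back x (a + b) = back (back x a) b.
Proof. by rewrite /back addnC iterD. Qed.
Lemma back1S x : back (ordS x) 1 = x. Proof. exact: ordSK. Qed.
Lemma ordS_back x m : ordS (back x m.+1) = back x m. Proof. exact: ord_predK. Qed.

Lemma pw_frame C C' j d : pw C j d ->
  (forall t, t <= d -> C' (back j t) = C (back j t)) -> pw C' j d.
Proof.
  move=> [[Hl Hnl] [Hs Hsg]] E.
  split; [split|split].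
  - by rewrite E.
  - by move=> t Ht; rewrite E ?Hnl // ltnW.
  - by rewrite E.
  - by move=> t Ht; rewrite E ?Hsg.
Qed.

Lemma pw_prefix C j m d : pw C (back j m) d ->
  (forall t, t < m -> ~~ leader (C (back j t)) /\ signal (C (back j t)) = false) ->
  pw C j (m + d).
Proof.
  move=> [[Hl Hnl] [Hs Hsg]] H.
  split; [split|split].
  - by rewrite backD.
  - move=> t Ht; case: (ltnP t m) => Htm; first by case: (H t Htm).
    rewrite -(subnKC Htm) backD; apply: Hnl; lia.
  - by rewrite backD.
  - move=> t Ht; case: (ltnP t m) => Htm; first by case: (H t Htm).
    rewrite -(subnKC Htm) backD; apply: Hsg; lia.
Qed.

Lemma pw_suffix C j d m : pw C j d -> m <= d -> pw C (back j m) (d - m).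
Proof.
  move=> [[Hl Hnl] [Hs Hsg]] Hm.
  split; [split|split].
  - by rewrite -backD subnKC.
  - by move=> t Ht; rewrite -backD; apply: Hnl; lia.
  - by rewrite -backD subnKC.
  - by move=> t Ht; rewrite -backD; apply: Hsg; lia.
Qed.

Lemma period C x d p : is_distL C x d -> 0 < p -> p <= d -> back x p = x -> False.
Proof.
  move=> [Hl Hnl] Hp Hpd Hb.
  suff H : forall t, ~~ leader (C (back x t)) by move: (H d); rewrite Hl.
  elim/ltn_ind => t IH.
  case: (ltnP t p) => Htp; first by apply: Hnl; exact: leq_trans Htp Hpd.
  rewrite -(subnKC Htp) backD Hb; apply: IH; lia.
Qed.

Lemma avoid C x d : is_distL C x d -> ~~ leader (C (ordS x)) ->
  forall t, 0 < t -> t <= d -> back x t != x /\ back x t != ordS x.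
Proof.
  move=> Hd Hk t Ht0 Htd; split; apply/eqP => E.
  - exact: (period Hd Ht0 Htd E).
  - case: (ltnP t d) => Htd'.
    + by apply: (period (p:=t.+1) Hd) => //; rewrite backS E ordSK.
    + have Etd : t = d by lia.
      case: Hd => Hl _; move: Hk; by rewrite -E Etd Hl.
Qed.

Section Step.
Variables (C : config n N) (i : 'I_n) (Hn : 1 < n).
Notation C' := (interact C i).
Notation k := (ordS i).

Lemma ordS_neq : k != i.
Proof.
  apply/eqP => /(congr1 val) /=; case: i => m Hm /= E.
  case: (ltnP m.+1 n) => H.
  - rewrite modn_small // in E; lia.
  - have Hmn : m.+1 = n by lia.
    rewrite Hmn modnn in E; lia.
Qed.

Lemma C'i : C' i = (transition (C i) (C k)).1.
Proof. by rewrite /interact eqxx. Qed.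
Lemma C'k : C' k = (transition (C i) (C k)).2.
Proof. by rewrite /interact (negbTE ordS_neq) eqxx. Qed.
Lemma C'o j : j != i -> j != k -> C' j = C j.
Proof. by rewrite /interact => /negbTE -> /negbTE ->. Qed.

Lemma L d : pw C i d -> ~~ leader (C k) -> ~~ leader (C' k) ->
  signal (C' k) = false -> exists d', pw C' i d'.
Proof.
  move=> Hpw Hk Hk' Hs'.
  have Hsi : signal (C i) = false by case: Hpw => _ [_ H]; exact: (H 0 isT).
  rewrite C'k in Hk' Hs'.
  have /andP [/eqP Hs1 /eqP Hsh1] := T6 Hsi Hk' Hs'.
  case Hli: (leader (C i)).
  - exists 0; split; [split|split] => //=.
    + by rewrite C'i T1 Hli.
    + have Hd : d = 0.
        by case: d Hpw => // d [[_ Hnl] _]; move: (Hnl 0 isT); rewrite /= Hli.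
      by rewrite C'i Hsh1; case: Hpw => _ [+ _]; rewrite Hd.
    + by move=> t; rewrite leqn0 => /eqP -> /=; rewrite C'i Hs1.
  - have Hd0 : 0 < d.
      case: d Hpw => // [[[Hl _] _]]; by move: Hl; rewrite /= Hli.
    have H1 := pw_suffix (m:=1) Hpw Hd0.
    have H2 : pw C' (back i 1) (d - 1).
      apply: pw_frame H1 _ => t Ht; rewrite -backD.
      have [A B] := avoid (proj1 Hpw) Hk (t:=1+t) isT (ltac:(lia)).
      by rewrite C'o.
    exists (1 + (d - 1)); apply: pw_prefix H2 _ => t Ht.
    rewrite (_ : t = 0) /=; last lia.
    by rewrite C'i T1 Hli Hs1.
Qed.

Lemma K d : pw C k d -> exists d', pw C' k d'.
Proof.
  move=> Hpw.
  have Hsk : signal (C k) = false by case: Hpw => _ [_ H]; exact: (H 0 isT).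
  case Hlk: (leader (C k)).
  - have Hd : d = 0.
      case: d Hpw => // d [[_ Hnl] _]; move: (Hnl 0 isT); by rewrite /= Hlk.
    have Hshk : shield (C k) by case: Hpw => _ [+ _]; rewrite Hd.
    have /andP [/andP [A B] D] := @T3 _ (C i) (C k) Hlk Hsk Hshk.
    exists 0; split; [split|split] => //=; rewrite ?C'k //.
    by move=> t; rewrite leqn0 => /eqP -> /=; rewrite C'k; apply/negbTE.
  - case Hlk': (leader (C' k)).
    + have := @T4 _ (C i) (C k) (negbT Hlk); rewrite -C'k Hlk' => /(_ isT) /andP [B D].
      exists 0; split; [split|split] => //=.
      by move=> t; rewrite leqn0 => /eqP -> /=; apply/negbTE.
    + have Hs' : signal (C' k) = false by rewrite C'k T5.
      have Hd0 : 0 < d.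
        case: d Hpw => // [[[Hl _] _]]; by move: Hl; rewrite /= Hlk.
      have H1 := pw_suffix (m:=1) Hpw Hd0; rewrite back1S in H1.
      have [d' H2] := L H1 (negbT Hlk) (negbT Hlk') Hs'.
      exists (1 + d'); apply: pw_prefix; first by rewrite back1S.
      move=> t Ht; rewrite (_ : t = 0) /=; last lia.
      by rewrite Hlk' Hs'.
Qed.

Lemma step : C_PB C -> C_PB C'.
Proof.
  move=> [[p Hp] HB]; split.
  - case: (eqVneq p i) => [Epi|Hpi].
      by exists i; rewrite C'i T1 -Epi.
    case: (eqVneq p k) => [Epk|Hpk]; last by exists p; rewrite C'o.
    subst p; case Hl': (leader (C' k)); first by exists k.
    have := @T8 _ (C i) (C k) Hp; rewrite -C'k Hl' => /(_ isT) /orP [Hli | /andP [/eqP Hb Hsr]].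
      by exists i; rewrite C'i.
    have [d [[Hl Hnl] [Hs Hsg]]] := HB i Hb.
    exists (back i d).
    case: (eqVneq (back i d) i) => [E|E1].
      by rewrite E C'i T1; rewrite E in Hl.
    case: (eqVneq (back i d) k) => [E|E2].
      move: (Hsg d (leqnn d)); rewrite E in Hs * => Hsd.
      by move: Hsr; rewrite Hs Hsd.
    by rewrite C'o.
  - move=> j Hj.
    case: (eqVneq j i) => [Eji|Hji].
      subst j; rewrite C'i in Hj; move: (@T2 _ (C i) (C k)); by rewrite Hj.
    case: (eqVneq j k) => [Ejk|Hjk].
      subst j; case: (eqVneq (bullet (C k) : nat) 2) => [Hb|Hb].
        have [d Hd] := HB _ Hb; exact: K Hd.
      rewrite C'k in Hj.
      have := @T7 _ (C i) (C k) (introT eqP Hj) Hb.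
      case/orP => [/andP [/andP [A B] D] | /and4P [Hlk Hlk' Hsk' /orP [/andP [/andP [A B] D] | /eqP Hbl]]].
      + exists 0; split; [split|split] => //=; rewrite ?C'k //.
        by move=> t; rewrite leqn0 => /eqP -> /=; rewrite C'k; apply/negbTE.
      + have Hpi : pw C' i 0.
          split; [split|split] => //=; rewrite ?C'i //.
          by move=> t; rewrite leqn0 => /eqP -> /=; rewrite C'i; apply/negbTE.
        exists (1 + 0); apply: pw_prefix; first by rewrite back1S.
        move=> t Ht; rewrite (_ : t = 0) /=; last lia.
        by rewrite C'k Hlk' (negbTE Hsk').
      + have [d Hd] := HB _ Hbl.
        have Hlk2 : ~~ leader (C' k) by rewrite C'k.
        have Hsk2 : signal (C' k) = false by rewrite C'k; apply/negbTE.
        have [d' Hd'] := L Hd Hlk Hlk2 Hsk2.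
        exists (1 + d'); apply: pw_prefix; first by rewrite back1S.
        move=> t Ht; rewrite (_ : t = 0) /=; last lia.
        by rewrite C'k Hlk' (negbTE Hsk').
    have Hj2 : (bullet (C j) : nat) = 2 by rewrite C'o in Hj.
    have [d Hd] := HB j Hj2.
    pose P m := (m <= d) && ((back j m == i) || (back j m == k)).
    case Hex: (has P (iota 0 d.+1)).
    + have Hex' : exists m, P m by move/hasP: Hex => [m _ Pm]; exists m.
      case: (ex_minnP Hex') => m /andP [Hmd Hm] Hmin.
      have Hm0 : 0 < m.
        case: m Hmd Hm Hmin => // _ /= /orP [] /eqP E; by [rewrite E eqxx in Hji | rewrite E eqxx in Hjk].
      have Hmk : back j m = k.
        case/orP: Hm => /eqP E //; exfalso.
        have : P m.-1.
          rewrite (_ : m = m.-1.+1) in E; last lia.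
          by rewrite /P -(ordS_back j m.-1) E eqxx orbT andbT; lia.
        by move/Hmin; lia.
      have H1 := pw_suffix Hd Hmd; rewrite Hmk in H1.
      have [d' H2] := K H1.
      exists (m + d'); apply: pw_prefix; first by rewrite Hmk.
      move=> t Ht.
      have HPt : ~~ P t by apply/negP => /Hmin; lia.
      move: HPt; rewrite /P (_ : t <= d); last lia.
      rewrite /= negb_or => /andP [A B]; rewrite C'o //.
      case: Hd => [[_ Hnl] [_ Hsg]]; split; [apply: Hnl | apply: Hsg]; lia.
    + exists d; apply: pw_frame Hd _ => t Ht.
      move/negbT/hasPn: Hex => Hn'.
      have Ht2 : t \in iota 0 d.+1 by rewrite mem_iota; lia.
      have := Hn' t Ht2.
      by rewrite /P Ht /= negb_or => /andP [A B]; rewrite C'o.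
Qed.
End Step.
End Ring.

Theorem lemma2 (n N : nat) (Hn2 : 2 <= n) (HnN : n <= N)
  (C C' : config n N) :
  C_PB C -> reachable C C' -> C_PB C'.
Proof.
  move=> H R; elim: R => // C1 i R IH; exact: step Hn2 IH.
Qed.
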